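(* The relation $\mathrm{Step}^{(p)}$ (par-steps of the algorithm BFS) is well-founded: there is no infinite sequence of configurations $\gamma_0,\gamma_1,\dots$ with $\gamma_i\xrightarrow{\mathrm{Step}^{(p)}}\gamma_{i+1}$ for all $i$.
   Context: Let $G$ be a finite, connected, undirected graph with node set $V$ and a distinguished node $r$ (the root). Each node $p$ has a fixed ordered list $N(p)$ of its neighbours. A configuration $\gamma$ assigns to each node $p$ a value $\gamma.p.d\in\mathbb N$ and a neighbour $\gamma.p.par\in N(p)$. For a non-root node $p$ let $Dist_p(\gamma)=\min\{\gamma.q.d+1 : q\in N(p)\}$. Algorithm BFS (Dolev et al.) has the following actions. Root: enabled iff $\gamma.r.d\neq 0$; executing it sets $r.d:=0$. Non-root $p$, action CD: enabled iff $\gamma.p.d\ne Dist_p(\gamma)$; executing sets $p.d:=Dist_p(\gamma)$. Non-root $p$, action CP: enabled iff $\gamma.p.d=Dist_p(\gamma)$ and $\gamma.q_0.d+1\neq\gamma.p.d$ where $q_0=\gamma.p.par$; executing sets $p.par$ to the first $q$ in the list $N(p)$ with $\gamma.q.d+1=\gamma.p.d$. A node is enabled if one of its actions is enabled (at most one is). A step $\gamma\to\gamma'$ (relation $\mathrm{Step}$, unfair daemon) holds iff there is a nonempty set $S$ of nodes enabled in $\gamma$ such that $\gamma'$ is obtained by every $p\in S$ simultaneously executing its enabled action (guards and right-hand sides evaluated in $\gamma$), all other nodes keeping their values. $\mathrm{Step}^{(p)}$ is the set of steps $\gamma\to\gamma'$ with $\gamma'.p.d=\gamma.p.d$ for all nodes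 $p$. A relation is well-founded if it admits no infinite forward chain $x_0 R x_1 R x_2\cdots$. *)

(* Defs.v *)
From mathcomp Require Import all_boot.
Set Implicit Arguments. Unset Strict Implicit. Unset Printing Implicit Defensive.

Section BFS.
Variables (V : finType) (N : V -> seq V) (r : V).

Definition bfs_graph : Prop :=
  [/\ forall p q, (q \in N p) = (p \in N q),
      forall p, p \notin N p,
      forall p, uniq (N p)
    & forall p q, connect (grel N) p q].

Record config := Config { cd : V -> nat; cpar : V -> V }.

Definition valid (g : config) : Prop := forall p, cpar g p \in N p.

(* Dist_p(g) = min { g.q.d + 1 : q in N(p) }  (N p is nonempty for non-root
   nodes of a connected graph with >= 2 nodes; default 0 never used). *)
Definition Dist (g : config) (p : V) : nat :=
  match N p with
  | [::] => 0
  | q0 :: s => foldr (fun q m => minn (cd g q).+1 m) (cd g q0).+1 s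
  end.

Definition enabled (g : config) (p : V) : bool :=
  if p == r then cd g r != 0
  else (cd g p != Dist g p) || ((cd g (cpar g p)).+1 != cd g p).

Definition first_par (g : config) (p : V) : V :=
  nth p (N p) (find (fun q => (cd g q).+1 == cd g p) (N p)).

Definition exec (g : config) (p : V) : nat * V :=
  if p == r then (0, cpar g p)
  else if cd g p != Dist g p then (Dist g p, cpar g p)   (* action CD *)
  else (cd g p, first_par g p).                            (* action CP *)

(* Step relation (unfair distributed daemon) between configurations *)
Definition Step (g g' : config) : Prop :=
  valid g /\ valid g' /\
  exists S : {set V}, [/\ S != set0,
    (forall p, p \in S -> enabled g p) &
    (forall p, (cd g' p, cpar g' p) =
               if p \in S then exec g p else (cd g p, cpar g p))].

Definition Step_par (g g' : config) : Prop :=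
  Step g g' /\ forall p, cd g' p = cd g p.

End BFS.

Definition wf_fwd (T : Type) (R : T -> T -> Prop) : Prop :=
  ~ exists f : nat -> T, forall i, R (f i) (f i.+1).

(* Main.v *)
Require Import Defs.
From mathcomp Require Import all_boot.
Set Implicit Arguments. Unset Strict Implicit. Unset Printing Implicit Defensive.

Lemma foldr_min_in (V : eqType) (f : V -> nat) (x0 : V) (s : seq V) :
  exists2 q, q \in x0 :: s &
    foldr (fun q m => minn (f q).+1 m) (f x0).+1 s = (f q).+1.
Proof.
elim: s => [|y s [q Hq Eq]] /=; first by exists x0; rewrite ?inE.
rewrite Eq; case: (leqP (f y).+1 (f q).+1) => H.
- exists y; first by rewrite !inE eqxx orbT.
  by move/minn_idPl: H.
- exists q; first by move: Hq; rewrite !inE => /orP [->|->]; rewrite ?orbT.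
  by move/ltnW/minn_idPr: H.
Qed.

Lemma Dist_ext (V : finType) (N : V -> seq V) (g g' : config V) p :
  (forall q, cd g' q = cd g q) -> Dist N g' p = Dist N g p.
Proof.
move=> E; rewrite /Dist; case: (N p) => [|q0 s] //.
rewrite E; elim: s => //= y s ->; by rewrite E.
Qed.

Lemma enabled_dec (V : finType) (N : V -> seq V) (r : V) g g' :
  Step_par N r g g' ->
  [set p | enabled N r g' p] \proper [set p | enabled N r g p].
Proof.
move=> [[vg [vg' [S [SN En Ex]]]] Ed].
have DE := fun p => @Dist_ext _ N g g' p Ed.
have dis : forall p, p \in S -> ~~ enabled N r g' p.
  move=> p pS; have := Ex p; rewrite pS /exec.
  have := En p pS; rewrite /enabled.
  case: (p =P r) => [->|pr] .
    by move=> H [E1 _]; move: H; rewrite -(Ed r) E1.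
  case: ifP => [/negP Hd _ [E1 _] | /negbFE/eqP Hd _ [E1 E2]].
    by exfalso; apply: Hd; rewrite -E1 Ed.
  rewrite DE Ed E2 -Hd eqxx /= Ed negbK.
  have: N p != [::] by move: (vg p); case: (N p).
  rewrite /first_par /Dist in Hd *.
  case E: (N p) => [|q0 s] // _.
  have [q Hq Eq] := foldr_min_in (cd g) q0 s.
  apply: (@nth_find _ p (fun q => (cd g q).+1 == cd g p)).
  apply/hasP; exists q => //.
  by rewrite Hd E Eq.
apply/properP; split.
  apply/subsetP => p; rewrite !inE.
  case pS: (p \in S); first by move=> H; move: (dis p pS); rewrite H.
  have := Ex p; rewrite pS => -[E1 E2].
  by rewrite /enabled DE !Ed E2.
have [p pS] : exists p, p \in S by apply/set0Pn.
by exists p; rewrite !inE; [apply: En | apply: dis].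
Qed.

Theorem lemma1 (V : finType) (N : V -> seq V) (r : V) :
  bfs_graph N -> wf_fwd (Step_par N r).
Proof.
move=> _ [f Hf].
pose m i := #|[set p | enabled N r (f i) p]|.
have dec : forall i, m i.+1 < m i by move=> i; apply: proper_card; apply: enabled_dec.
have H : forall i, m i + i <= m 0.
  elim=> [|i IH]; first by rewrite addn0.
  by apply: leq_trans IH; rewrite addnS ltn_add2r.
by have := H (m 0).+1; rewrite addnS ltnNge leq_addl.
Qed.
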